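(* Let $N=\{1,\dots,n\}$, $\eta>0$, $B\ge1$ an integer. Let $(A(k))_{k\ge0}$ be $n\times n$ matrices, $x(0)\in\mathbb{R}^n$, and $x(k+1)=A(k)x(k)$. Assume: (i) each $A(k)$ is doubly stochastic with positive diagonal entries and all positive entries at least $\eta$; (ii) for every integer $k\ge0$, every permutation $\sigma$ of $N$ with $x_{\sigma(1)}(kB)\ge\cdots\ge x_{\sigma(n)}(kB)$, and every $d\in\{1,\dots,n-1\}$, either $x_{\sigma(d)}(kB)=x_{\sigma(d+1)}(kB)$, or there exist $t\in\{kB,\dots,(k+1)B-1\}$, $i\in\{\sigma(1),\dots,\sigma(d)\}$, $j\in\{\sigma(d+1),\dots,\sigma(n)\}$ with $(i,j)$ or $(j,i)$ in $\mathcal{E}(A(t))$. Then for every integer $k\ge0$ and every permutation $\sigma$ of $N$ with $x_{\sigma(1)}(kB)\ge\cdots\ge x_{\sigma(n)}(kB)$, \[V(x(kB))-V(x((k+1)B))\ge\frac\eta2\sum_{i=1}^{n-1}\big(x_{\sigma(i)}(kB)-x_{\sigma(i+1)}(kB)\big)^2.\]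
   Context: A matrix is doubly stochastic if it is nonnegative with all row and column sums equal to $1$. For a matrix $A=[a_{ij}]$, $\mathcal{E}(A)$ is the set of directed edges $(j,i)$ (including self-edges) with $a_{ij}>0$. For $x\in\mathbb{R}^n$, $\bar x=\frac1n\sum_ix_i$ and $V(x)=\sum_i(x_i-\bar x)^2$. *)

(* Defs.v *)
(* R : realFieldType, vectors are column vectors 'cV[R]_n,
   indices N = {1,...,n} are represented 0-based by 'I_n. *)
From HB Require Import structures.
From mathcomp Require Import all_boot all_order all_algebra all_fingroup.
Set Implicit Arguments. Unset Strict Implicit. Unset Printing Implicit Defensive.
Import Order.TTheory GRing.Theory Num.Theory.
Local Open Scope ring_scope.

Definition doubly_stochastic (R : realFieldType) (n : nat) (A : 'M[R]_n) : Prop :=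
  (forall i j, 0 <= A i j) /\
  (forall i, \sum_j A i j = 1) /\
  (forall j, \sum_i A i j = 1).

Definition in_edges (R : realFieldType) (n : nat) (A : 'M[R]_n) (j i : 'I_n) : Prop :=
  0 < A i j.

Definition xbar (R : realFieldType) (n : nat) (x : 'cV[R]_n) : R :=
  (\sum_i x i 0) / n%:R.
Definition Vfun (R : realFieldType) (n : nat) (x : 'cV[R]_n) : R :=
  \sum_i (x i 0 - xbar x) ^+ 2.

(* entry x_{sigma(p+1)} (0-based position p); 0 out of range (never used there) *)
Definition xpos (R : realFieldType) (n : nat) (s : 'S_n) (x : 'cV[R]_n) (p : nat) : R :=
  match (insub p : option 'I_n) with Some i => x (s i) 0 | None => 0 end.

Definition sorted_by (R : realFieldType) (n : nat) (s : 'S_n) (x : 'cV[R]_n) : Prop :=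
  forall p q : nat, (p <= q)%N -> (q < n)%N -> xpos s x q <= xpos s x p.

(* Main.v *)
Require Import Defs.
From HB Require Import structures.
From mathcomp Require Import all_boot all_order all_algebra all_fingroup.
From mathcomp Require Import ring lra.
From Stdlib Require Import Classical.
Import Order.TTheory GRing.Theory Num.Theory.
Local Open Scope ring_scope.
From mathcomp Require Import zify.

Section Helpers.
Variable R : realFieldType.

Lemma sq_diff_sum (n : nat) (z w : 'cV[R]_n) (c : R) :
  \sum_i z i 0 = \sum_i w i 0 ->
  \sum_i (z i 0 - c) ^+ 2 - \sum_i (w i 0 - c) ^+ 2 =
  \sum_i (z i 0) ^+ 2 - \sum_i (w i 0) ^+ 2.
Proof.
move=> Hs.
rewrite -!sumrB.
have -> : \sum_i ((z i 0 - c) ^+ 2 - (w i 0 - c) ^+ 2) =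
          \sum_i ((z i 0 ^+ 2 - w i 0 ^+ 2) - (c *+ 2) * (z i 0 - w i 0)).
  by apply: eq_bigr => i _; ring.
have h0 : \sum_i (c *+ 2 * (z i 0 - w i 0)) = 0.
  by rewrite -mulr_sumr (sumrB _ _ (fun i => z i 0)) Hs subrr mulr0.
rewrite (sumrB _ _ (fun i => z i 0 ^+ 2 - w i 0 ^+ 2)) h0 subr0.
by rewrite (sumrB _ _ (fun i => z i 0 ^+ 2)).

Qed.

Lemma Vdiff (n : nat) (A : 'M[R]_n) (x : 'cV[R]_n) :
  doubly_stochastic A ->
  Vfun x - Vfun (A *m x) =
  \sum_p \sum_j A p j * (x j 0 - (A *m x) p 0) ^+ 2.
Proof.
move=> [Ha [Hr Hc]].
set y := A *m x.
have Hy : forall p, y p 0 = \sum_j A p j * x j 0 by move=> p; rewrite mxE.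
have sy : \sum_i y i 0 = \sum_i x i 0.
  under eq_bigr do rewrite Hy.
  rewrite exchange_big /=.
  by apply: eq_bigr => j _; rewrite -mulr_suml Hc mul1r.
have xb : xbar y = xbar x by rewrite /xbar sy.
rewrite /Vfun xb sq_diff_sum //.
have -> : \sum_p \sum_j A p j * (x j 0 - y p 0) ^+ 2 =
          \sum_p (\sum_j A p j * x j 0 ^+ 2 - y p 0 ^+ 2).
  apply: eq_bigr => p _.
  have -> : \sum_j A p j * (x j 0 - y p 0) ^+ 2 =
            \sum_j (A p j * x j 0 ^+ 2 - (y p 0 *+ 2) * (A p j * x j 0)
                    + y p 0 ^+ 2 * A p j).
    by apply: eq_bigr => j _; ring.
  rewrite big_split /= sumrB -!mulr_sumr Hr -Hy.
  ring.
rewrite sumrB exchange_big /=.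
congr (_ - _).
by apply: eq_bigr => j _; rewrite -mulr_suml Hc mul1r.
Qed.

End Helpers.

Section Helpers2.
Variable R : realFieldType.

Lemma sum_ge_term (I : finType) (F : I -> R) (i : I) :
  (forall j, 0 <= F j) -> F i <= \sum_j F j.
Proof.
move=> H; rewrite (bigD1 i) //= lerDl; apply: sumr_ge0 => j _; exact: H.
Qed.

Lemma rowbound (n : nat) (A : 'M[R]_n) (x : 'cV[R]_n) (eta c : R) (p j1 j2 : 'I_n) :
  (forall i j, 0 <= A i j) -> 0 < eta -> eta <= A p j1 -> eta <= A p j2 ->
  eta / 2 * (x j1 0 - x j2 0) ^+ 2 <= \sum_j A p j * (x j 0 - c) ^+ 2.
Proof.
move=> Ha He H1 H2.
have Hnn : forall j, 0 <= A p j * (x j 0 - c) ^+ 2.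
  by move=> j; apply: mulr_ge0 => //; apply: sqr_ge0.
case: (eqVneq j1 j2) => [<-|Hne].
  rewrite subrr expr0n /= mulr0; apply: sumr_ge0 => j _; exact: Hnn.
rewrite (bigD1 j1) //= (bigD1 j2) /=; last by rewrite eq_sym.
have Hr : 0 <= \sum_(i | (i != j1) && (i != j2)) A p i * (x i 0 - c) ^+ 2.
  by apply: sumr_ge0 => j _; exact: Hnn.
set a := x j1 0; set b := x j2 0.
have Ha1 : eta * (a - c) ^+ 2 <= A p j1 * (a - c) ^+ 2.
  by apply: ler_wpM2r => //; apply: sqr_ge0.
have Hb1 : eta * (b - c) ^+ 2 <= A p j2 * (b - c) ^+ 2.
  by apply: ler_wpM2r => //; apply: sqr_ge0.
have Hq : (a - b) ^+ 2 <= 2 * ((a - c) ^+ 2 + (b - c) ^+ 2).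
  have : 0 <= (a + b - c *+ 2) ^+ 2 by apply: sqr_ge0.
  move=> h; rewrite -subr_ge0; rewrite -subr_ge0 in h.
  have -> : 2 * ((a - c) ^+ 2 + (b - c) ^+ 2) - (a - b) ^+ 2 = (a + b - c *+ 2) ^+ 2 - 0 by ring.
  exact: h.
have Hq2 : eta / 2 * (a - b) ^+ 2 <= eta * ((a - c) ^+ 2 + (b - c) ^+ 2).
  have -> : eta * ((a - c) ^+ 2 + (b - c) ^+ 2) = eta / 2 * (2 * ((a - c) ^+ 2 + (b - c) ^+ 2)).
    by field.
  apply: ler_wpM2l => //; apply: divr_ge0; [exact: ltW | by []].
lra.
Qed.

Definition clamp (m M v : R) := if v < m then m else if M < v then M else v.

Lemma clamp_bounds m M v : m <= M -> m <= clamp m M v /\ clamp m M v <= M.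
Proof. by rewrite /clamp => h; case: (ltP v m) => h1; case: (ltP M v) => h2; split; lra. Qed.

Lemma clamp_mono m M v w : m <= M -> w <= v -> clamp m M w <= clamp m M v.
Proof.
rewrite /clamp => h hv.
by case: (ltP v m) => h1; case: (ltP M v) => h2; case: (ltP w m) => h3;
   case: (ltP M w) => h4; lra.
Qed.

Lemma clamp_id m M v : m <= v -> v <= M -> clamp m M v = v.
Proof. by rewrite /clamp => h1 h2; case: (ltP v m) => h3; case: (ltP M v) => h4 //; lra. Qed.

Lemma cover_le (xs : nat -> R) (N : nat) (m M : R) :
  m <= M -> (forall i, (i < N)%N -> xs i.+1 <= xs i) ->
  \sum_(0 <= i < N) (((m <= xs i.+1) && (xs i <= M))%:R * (xs i - xs i.+1) ^+ 2)
    <= (M - m) ^+ 2.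
Proof.
move=> hmM hs.
set c := fun i => clamp m M (xs i).
apply: (@le_trans _ _ (\sum_(0 <= i < N) ((M - m) * (c i - c i.+1)))).
  rewrite big_nat [X in _ <= X]big_nat; apply: ler_sum => i /andP [_ hi].
  have hsi := hs i hi.
  case: (boolP ((m <= xs i.+1) && (xs i <= M))) => /= [/andP [h1 h2]|_].
    rewrite /c !clamp_id //; try lra.
    rewrite mul1r expr2; apply: ler_wpM2r; lra.
  rewrite mul0r; apply: mulr_ge0; first lra.
  rewrite subr_ge0; exact: clamp_mono.
rewrite -mulr_sumr.
have -> : \sum_(0 <= i < N) (c i - c i.+1) = c 0%N - c N.
  have := telescope_sumr (fun i => - c i) (leq0n N).
  rewrite opprK => h; rewrite [c 0%N - c N]addrC -h.
  by apply: eq_bigr => i _; rewrite opprK addrC.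
have [h0a h0b] := clamp_bounds m M (xs 0%N) hmM.
have [hNa hNb] := clamp_bounds m M (xs N) hmM.
rewrite expr2; apply: ler_wpM2l; rewrite /c; lra.
Qed.

End Helpers2.

Section Inv.
Variable R : realFieldType.
Variable n : nat.
Variable A : nat -> 'M[R]_n.
Variable x : nat -> 'cV[R]_n.
Hypothesis Hx : forall k, x k.+1 = A k *m x k.
Hypothesis Hnn : forall k i j, 0 <= A k i j.
Hypothesis Hrow : forall k i, \sum_j A k i j = 1.
Hypothesis Hd : forall k (i : 'I_n), 0 < A k i i.
Variable s : 'S_n.
Variable t0 : nat.
Hypothesis Hsort : sorted_by s (x t0).
Variable i : nat.
Hypothesis Hi : (i.+1 < n)%N.

Definition pos (j : 'I_n) : nat := (s^-1)%g j.
Definition xs (p : nat) : R := xpos s (x t0) p.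

Lemma xs_pos (j : 'I_n) : xs (pos j) = x t0 j 0.
Proof. by rewrite /xs /xpos /pos valK permKV. Qed.

Definition Inv t := forall j : 'I_n,
  ((pos j <= i)%N -> xs i <= x t j 0) /\ ((i < pos j)%N -> x t j 0 <= xs i.+1).

Definition cross t := exists u l : 'I_n,
  [/\ (pos u <= i)%N, (i < pos l)%N & (0 < A t l u \/ 0 < A t u l)].

Definition jmax t p := [arg max_(j > p | 0 < A t p j) x t j 0]%O.
Definition jmin t p := [arg min_(j < p | 0 < A t p j) x t j 0]%O.

Lemma jmaxP t p : 0 < A t p (jmax t p) /\
  forall j, 0 < A t p j -> x t j 0 <= x t (jmax t p) 0.
Proof. rewrite /jmax; case: (@arg_maxP _ _ _ p (fun j => 0 < A t p j) (fun j => x t j 0) (Hd t p)) => j Pj Hj; by split. Qed.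

Lemma jminP t p : 0 < A t p (jmin t p) /\
  forall j, 0 < A t p j -> x t (jmin t p) 0 <= x t j 0.
Proof. rewrite /jmin; case: (@arg_minP _ _ _ p (fun j => 0 < A t p j) (fun j => x t j 0) (Hd t p)) => j Pj Hj; by split. Qed.

Definition covb t p : bool :=
  (x t (jmin t p) 0 <= xs i.+1) && (xs i <= x t (jmax t p) 0).

Lemma inv0 : Inv t0.
Proof.
move=> j; split => h.
- rewrite -xs_pos; apply: Hsort => //; exact: ltnW.
- rewrite -xs_pos; apply: Hsort => //; exact: ltn_ord.
Qed.

Lemma inv_step t : Inv t -> ~ cross t -> Inv t.+1.
Proof.
move=> HI Hc j; split => h.
- rewrite Hx mxE.
  apply: (@le_trans _ _ (\sum_l A t j l * xs i)).
    by rewrite -mulr_suml Hrow mul1r.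
  apply: ler_sum => l _.
  case: (leqP (pos l) i) => hl.
    apply: ler_wpM2l => //; exact: (proj1 (HI l) hl).
  have -> : A t j l = 0.
    apply/eqP; rewrite eq_le Hnn andbT; rewrite leNgt; apply/negP => hp.
    by apply: Hc; exists j, l; split => //; right.
  by rewrite !mul0r.
- rewrite Hx mxE.
  apply: (@le_trans _ _ (\sum_l A t j l * xs i.+1)); last first.
    by rewrite -mulr_suml Hrow mul1r.
  apply: ler_sum => l _.
  case: (leqP (pos l) i) => hl; last first.
    apply: ler_wpM2l => //; exact: (proj2 (HI l) hl).
  have -> : A t j l = 0.
    apply/eqP; rewrite eq_le Hnn andbT; rewrite leNgt; apply/negP => hp.
    by apply: Hc; exists l, j; split => //; left.
  by rewrite !mul0r.
Qed.

Lemma cov_cross t : Inv t -> cross t -> exists p, covb t p.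
Proof.
move=> HI [u [l [hu hl He]]].
have Hu := proj1 (HI u) hu.
have Hl := proj2 (HI l) hl.
case: He => He.
- exists l; apply/andP; split.
  + have [_ H] := jminP t l; apply: le_trans (H l (Hd t l)) Hl.
  + have [_ H] := jmaxP t l; apply: le_trans Hu (H u He).
- exists u; apply/andP; split.
  + have [_ H] := jminP t u; apply: le_trans (H l He) Hl.
  + have [_ H] := jmaxP t u; apply: le_trans Hu (H u (Hd t u)).
Qed.

Lemma reach r : (exists r', (r' < r)%N /\ exists p, covb (t0 + r') p) \/ Inv (t0 + r).
Proof.
elim: r => [|r [[r' [h1 h2]]|IH]].
- by right; rewrite addn0; exact: inv0.
- by left; exists r'; split => //; exact: ltnW.
- case: (classic (cross (t0 + r))) => hc.
  + by left; exists r; split => //; exact: cov_cross.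
  + by right; rewrite addnS; exact: inv_step.
Qed.

Lemma covered (t1 : nat) : (t0 <= t1)%N -> cross t1 ->
  exists r, (r <= t1 - t0)%N /\ exists p, covb (t0 + r) p.
Proof.
move=> h1 hc.
case: (reach (t1 - t0)) => [[r' [h2 h3]]|HI].
- by exists r'; split => //; exact: ltnW.
- exists (t1 - t0)%N; split => //.
  apply: cov_cross => //; by rewrite subnKC.
Qed.

End Inv.

Theorem lemma4 (R : realFieldType) (n : nat) (eta : R) (B : nat)
  (A : nat -> 'M[R]_n) (x : nat -> 'cV[R]_n) :
  0 < eta ->
  (1 <= B)%N ->
  (forall k, x k.+1 = A k *m x k) ->
  (forall k, doubly_stochastic (A k)) ->
  (forall k (i : 'I_n), 0 < A k i i) ->
  (forall k (i j : 'I_n), 0 < A k i j -> eta <= A k i j) ->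
  (forall (k : nat) (s : 'S_n), sorted_by s (x (k * B)%N) ->
     forall d : nat, (1 <= d)%N -> (d <= n - 1)%N ->
       xpos s (x (k * B)%N) d.-1 = xpos s (x (k * B)%N) d \/
       exists (t : nat) (i j : 'I_n),
         [/\ (k * B <= t)%N, (t <= k.+1 * B - 1)%N,
             (((s^-1)%g i) < d)%N, (d <= (s^-1)%g j)%N &
             (in_edges (A t) i j \/ in_edges (A t) j i)]) ->
  forall (k : nat) (s : 'S_n), sorted_by s (x (k * B)%N) ->
    Vfun (x (k * B)%N) - Vfun (x (k.+1 * B)%N) >=
      eta / 2 * \sum_(0 <= i < n - 1)
        (xpos s (x (k * B)%N) i - xpos s (x (k * B)%N) i.+1) ^+ 2.
Proof.
move=> He HB Hx Hds Hd Heta Hcut k s Hs.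
have Hnn : forall k i j, 0 <= A k i j by move=> k' i j; case: (Hds k') => h _; exact: h.
have Hrow : forall k i, \sum_j A k i j = 1 by move=> k' i; case: (Hds k') => _ [h _]; exact: h.
set t0 := (k * B)%N.
have Ht1 : (k.+1 * B)%N = (t0 + B)%N by rewrite mulSn addnC.
rewrite Ht1.
set g := fun i => xpos s (x t0) i - xpos s (x t0) i.+1.
have Htel : forall m, Vfun (x t0) - Vfun (x (t0 + m)%N) =
    \sum_(r < m) (Vfun (x (t0 + r)%N) - Vfun (x (t0 + r).+1)).
  elim => [|m IH]; first by rewrite big_ord0 addn0 subrr.
  by rewrite big_ord_recr /= -IH addnS addrA subrK.
rewrite Htel.
set Mx := fun t p => x t (jmax R n A x t p) 0.
set Mn := fun t p => x t (jmin R n A x t p) 0.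
set F := fun r p i => (covb R n A x s t0 i (t0 + r) p)%:R * g i ^+ 2.
have Hstep : forall t, eta / 2 * \sum_p (Mx t p - Mn t p) ^+ 2 <=
                       Vfun (x t) - Vfun (x t.+1).
  move=> t; rewrite Hx Vdiff // mulr_sumr; apply: ler_sum => p _.
  apply: rowbound => //.
  - by apply: Heta; exact: (proj1 (jmaxP R n A x Hd t p)).
  - by apply: Heta; exact: (proj1 (jminP R n A x Hd t p)).
have Hcov : forall r p, \sum_(0 <= i < n - 1) F r p i <= (Mx (t0 + r)%N p - Mn (t0 + r)%N p) ^+ 2.
  move=> r p; rewrite /F /g /covb.
  apply: (@cover_le R (fun i => xpos s (x t0) i) (n - 1)%N).
  - have [_ H] := jminP R n A x Hd (t0 + r)%N p.
    exact: (H _ (proj1 (jmaxP R n A x Hd (t0 + r)%N p))).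
  - move=> i hi; apply: Hs => //; lia.
apply: (@le_trans _ _ (eta / 2 * \sum_(r < B) \sum_p \sum_(0 <= i < n - 1) F r p i)).
  apply: ler_wpM2l; first by apply: divr_ge0; [exact: ltW | by []].
  have -> : \sum_(r < B) \sum_p \sum_(0 <= i < n - 1) F r p i =
            \sum_(0 <= i < n - 1) \sum_(r < B) \sum_p F r p i.
    under eq_bigr do rewrite exchange_big.
    by rewrite exchange_big.
  rewrite big_nat [X in _ <= X]big_nat; apply: ler_sum => i /andP [_ hi].
  have Fnn : forall r p, 0 <= F r p i.
    by move=> r p; rewrite /F; apply: mulr_ge0; [exact: ler0n | exact: sqr_ge0].
  change (g i ^+ 2 <= \sum_(r < B) \sum_p F r p i).
  case: (eqVneq (g i) 0) => hg.
    rewrite hg expr0n /=; apply: sumr_ge0 => r _; apply: sumr_ge0 => p _; exact: Fnn.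
  have [heq|[t [u [l [h1 h2 h3 h4 h5]]]]] := Hcut k s Hs i.+1 (ltn0Sn i) hi.
    by exfalso; move: hg; rewrite /g /= heq subrr eqxx.
  have Hi : (i.+1 < n)%N by lia.
  have hc : cross R n A s i t.
    exists u, l; split.
    - by rewrite /pos -ltnS.
    - by rewrite /pos.
    - by case: h5 => h; [left|right].
  have [r [hr [p hp]]] := covered R n A x Hx Hnn Hrow Hd s t0 Hs i Hi t h1 hc.
  have hrB : (r < B)%N.
    move: h2 hr; rewrite -/t0 Ht1 => h2 hr; lia.
  apply: (@le_trans _ _ (\sum_p F r p i)); last first.
    apply: (@sum_ge_term R 'I_B (fun r : 'I_B => \sum_p F r p i) (Ordinal hrB)).
    by move=> j; apply: sumr_ge0 => q _; exact: Fnn.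
  apply: le_trans (@sum_ge_term R _ (fun q => F r q i) p (Fnn r)).
  by rewrite /F hp mul1r.
rewrite mulr_sumr; apply: ler_sum => r _.
apply: le_trans (Hstep (t0 + r)%N).
apply: ler_wpM2l; first by apply: divr_ge0; [exact: ltW | by []].
apply: ler_sum => p _; exact: Hcov.
Qed.
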